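(* Let $\mathcal{Y}$ be a Hilbert space (identified with its dual) and let $\mathcal{X}=\mathcal{Z}^*$ be the dual space of a Banach space $\mathcal{Z}$, such that weak-star convergence in $\mathcal{X}$ is metrizable on bounded sets. Let $B:\mathcal{Y}\to\mathcal{Z}$ be a bounded linear operator and $A=B^*:\mathcal{X}\to\mathcal{Y}$. Let $J:\mathcal{X}\to\mathbb{R}\cup\{\infty\}$ be convex and absolutely one-homogeneous, and the convex conjugate of a proper functional on $\mathcal{Z}$, and assume that $u\mapsto \frac12\|Au\|_{\mathcal{Y}}^2+J(u)$ is coercive on $\mathcal{X}$. Let $f\in\mathcal{Y}$. Let $p\in\partial J(0)\cap\mathcal{Z}\subset\mathcal{X}^*$ be such that there exist $w\in\mathcal{Y}$ and $0<\tau<1$ with $$J^*\Big(\frac{p-Bw}{\tau}\Big)=0.$$ Then there exists a minimizer of $$\min_{u\in\mathcal{X}}\ \frac12\|Au-f\|_{\mathcal{Y}}^2\quad\text{subject to}\quad J(u)-\langle p,u\rangle=0.$$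
   Context: $J$ absolutely one-homogeneous means $J(\lambda u)=|\lambda|J(u)$ for all $\lambda\in\mathbb{R}$, $u\in\mathcal{X}$. $J^*$ denotes the convex conjugate of $J$, $J^*(r)=\sup_{u\in\mathcal{X}}\langle r,u\rangle-J(u)$ for $r\in\mathcal{X}^*$. $\partial J(0)$ is the convex subdifferential of $J$ at $0$; $\mathcal{Z}$ is regarded as a subspace of $\mathcal{X}^*=\mathcal{Z}^{**}$. *)

(* Defs.v *)
From mathcomp Require Import all_boot all_order all_algebra.
From mathcomp Require Import all_classical all_reals all_analysis.
Import Order.TTheory GRing.Theory Num.Theory numFieldNormedType.Exports.
Set Implicit Arguments. Unset Strict Implicit. Unset Printing Implicit Defensive.
Local Open Scope classical_set_scope.
Local Open Scope ring_scope.

(* X = Z^star is represented inside Z -> R: elements of X are the u : Z -> R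
   that are linear and continuous. *)
Definition is_dual {R : realType} {Z : normedModType R} (u : Z -> R) : Prop :=
  (forall (a : R) (x y : Z), u (a *: x + y) = a * u x + u y) /\ continuous u.

Definition dual_norm {R : realType} {Z : normedModType R} (u : Z -> R) : R :=
  sup [set `|u z| | z in [set z : Z | `|z| <= 1]].

Definition wstar_basic {R : realType} {Z : normedModType R}
  (x : Z -> R) (s : seq Z) (e : R) : set (Z -> R) :=
  [set v | is_dual v /\ forall z, z \in s -> `|v z - x z| < e].

Definition wstar_metrizable_on_bounded (R : realType) (Z : normedModType R) : Prop :=
  forall S : set (Z -> R), S `<=` is_dual ->
  (exists r : R, forall u, S u -> dual_norm u <= r) ->
  exists d : (Z -> R) -> (Z -> R) -> R,
    (forall x y, S x -> S y -> 0 <= d x y /\ (d x y = 0 <-> x = y) /\ d x y = d y x) /\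
    (forall x y w, S x -> S y -> S w -> d x w <= d x y + d y w) /\
    (forall x, S x -> forall U : set (Z -> R),
       (exists (s : seq Z) (e : R), 0 < e /\ wstar_basic x s e `&` S `<=` U) <->
       (exists e : R, 0 < e /\ [set y | S y /\ d x y < e] `<=` U)).

(* the norm of Y comes from the inner product ip (Y complete => Hilbert) *)
Definition is_inner_product {R : realType} {Y : normedModType R} (ip : Y -> Y -> R) : Prop :=
  (forall (a : R) (x y z : Y), ip (a *: x + y) z = a * ip x z + ip y z) /\
  (forall x y : Y, ip x y = ip y x) /\
  (forall y : Y, `|y| ^+ 2 = ip y y).

Local Open Scope ereal_scope.

Definition convex_on_dual {R : realType} {Z : normedModType R}
  (J : (Z -> R) -> \bar R) : Prop :=
  forall u v, is_dual u -> is_dual v -> forall t : R, (0 <= t <= 1)%R ->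
    J (fun z => t * u z + (1 - t) * v z)%R <= t%:E * J u + (1 - t)%:E * J v.

Definition abs_one_homogeneous {R : realType} {Z : normedModType R}
  (J : (Z -> R) -> \bar R) : Prop :=
  forall (l : R) u, is_dual u -> J (fun z => l * u z)%R = `|l|%:E * J u.

Definition proper_fun {R : realType} {Z : normedModType R} (G : Z -> \bar R) : Prop :=
  (forall z, G z != -oo) /\ (exists z, G z != +oo).

Definition is_conjugate_of {R : realType} {Z : normedModType R}
  (J : (Z -> R) -> \bar R) (G : Z -> \bar R) : Prop :=
  forall u, is_dual u -> J u = ereal_sup [set (u z)%:E - G z | z in [set: Z]].

(* J^star(r) for r in Z, seen in X^star = Z^star* via the canonical embedding *)
Definition conj_at {R : realType} {Z : normedModType R}
  (J : (Z -> R) -> \bar R) (r : Z) : \bar R :=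
  ereal_sup [set (u r)%:E - J u | u in @is_dual R Z].

Definition in_subdiff0 {R : realType} {Z : normedModType R}
  (J : (Z -> R) -> \bar R) (p : Z) : Prop :=
  forall u, is_dual u -> J u >= J (fun _ => 0%R) + (u p)%:E.

Definition coercive_on_dual {R : realType} {Y Z : normedModType R}
  (A : (Z -> R) -> Y) (J : (Z -> R) -> \bar R) : Prop :=
  forall M : R, exists r : R, forall u, is_dual u -> (r < dual_norm u)%R ->
    M%:E < (`|A u| ^+ 2 / 2)%:E + J u.

(* Main.v *)
Require Import Defs.
From mathcomp Require Import all_boot all_order all_algebra.
From mathcomp Require Import all_classical all_reals all_analysis.
From mathcomp Require Import ring lra.
Import Order.TTheory GRing.Theory Num.Theory numFieldNormedType.Exports.
Local Open Scope classical_set_scope.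
Local Open Scope ring_scope.

Set Implicit Arguments. Unset Strict Implicit.

Section Lin.
Variables (R : realType) (Z : normedModType R).
Definition islin (u : Z -> R) := forall (a : R) (x y : Z), u (a *: x + y) = a * u x + u y.

Lemma lin0 u : islin u -> u 0 = 0.
Proof. move=> h; have := h 1 0 0; rewrite scaler0 addr0 mul1r.
by move/(congr1 (fun t => t - u 0)); rewrite subrr addrK. Qed.

Lemma linZ u : islin u -> forall a x, u (a *: x) = a * u x.
Proof. by move=> h a x; have := h a x 0; rewrite addr0 lin0 // addr0. Qed.

Lemma linB u : islin u -> forall x y, u (x - y) = u x - u y.
Proof. move=> h x y; rewrite addrC -scaleN1r h mulN1r addrC //. Qed.

Lemma linD u : islin u -> forall x y, u (x + y) = u x + u y.
Proof. by move=> h x y; have := h 1 x y; rewrite scale1r mul1r. Qed.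

Lemma bounded_cont u (r : R) : islin u -> (forall z, `|u z| <= r * `|z|) -> continuous u.
Proof.
move=> hl hb x; apply/cvgrPdist_lt => e e0.
have r1 : 0 < `|r| + 1 by rewrite ltr_wpDl.
apply/nbhs_normP; exists (e / (`|r| + 1)); first by rewrite /= divr_gt0.
move=> t /= hxt; rewrite -linB //; apply: (le_lt_trans (hb _)).
apply: (le_lt_trans (ler_wpM2r (normr_ge0 _) (ler_norm r))).
apply: (le_lt_trans (ler_wpM2r (normr_ge0 _) (ler_wpDr ler01 (lexx `|r|)))).
by rewrite mulrC -ltr_pdivlMr.
Qed.

Lemma cont_hasub u : islin u -> continuous u ->
  has_sup [set `|u z| | z in [set z : Z | `|z| <= 1]].
Proof.
move=> hl hc; split; first by exists `|u 0|; exists 0; rewrite //= normr0 ler01.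
have := hc 0; move/cvgrPdist_lt/(_ 1 ltr01) => /nbhs_normP [d d0 Hd].
exists (2 / d) => _ [z /= z1 <-].
have d2 : 0 < d / 2 by rewrite divr_gt0.
have hz : ball_ Num.norm (0 : Z) d ((d / 2) *: z).
  rewrite /ball_ /= sub0r normrN normrZ (gtr0_norm d2).
  apply: (le_lt_trans (ler_wpM2l (ltW d2) z1)).
  by rewrite mulr1 ltr_pdivrMr // ltr_pMr // ltr1n.
have := Hd _ hz; rewrite /= lin0 // sub0r normrN linZ // normrM (gtr0_norm d2).
move=> h.
have -> : `|u z| = (d / 2 * `|u z|) * (2 / d).
  by field; rewrite gt_eqF.
rewrite -[X in _ <= X]mul1r ler_pM2r ?divr_gt0 //; exact: ltW.
Qed.
End Lin.
Arguments islin {R Z}.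

Lemma dual_bound (R : realType) (Z : normedModType R) (u : Z -> R) (r : R) :
  is_dual u -> dual_norm u <= r -> forall z, `|u z| <= r * `|z|.
Proof.
move=> [hl hc] hr z; have hs := cont_hasub hl hc.
have [->|z0] := eqVneq z 0; first by rewrite lin0 // !normr0 mulr0.
have nz : 0 < `|z| by rewrite normr_gt0.
have : `|u (`|z|^-1 *: z)| <= r.
  apply: le_trans hr; apply: sup_upper_bound => //; exists (`|z|^-1 *: z) => //=.
  by rewrite normrZ normfV normr_id mulVf ?gt_eqF.
rewrite linZ // normrM normfV normr_id => h.
have -> : `|u z| = `|z| * (`|z|^-1 * `|u z|) by rewrite mulrA mulfV ?gt_eqF ?mul1r.
by rewrite mulrC ler_pM2r.
Qed.

Section IP.
Variables (R : realType) (Y : normedModType R) (ip : Y -> Y -> R).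
Hypothesis hip : is_inner_product ip.

Lemma ip0 z : ip 0 z = 0.
Proof. case: hip => h _; have := h 1 0 0 z; rewrite scaler0 addr0 mul1r.
by move/(congr1 (fun t => t - ip 0 z)); rewrite subrr addrK. Qed.

Lemma ipB x y z : ip (x - y) z = ip x z - ip y z.
Proof. case: hip => h _; rewrite addrC -scaleN1r h mulN1r addrC //. Qed.

Lemma ipBr x y z : ip z (x - y) = ip z x - ip z y.
Proof. case: hip => _ [hs _]; by rewrite hs ipB (hs x) (hs y). Qed.

Lemma ip_le x y : ip x y <= (`|x| ^+ 2 + `|y| ^+ 2) / 2.
Proof.
case: hip => _ [hs hn].
have : 0 <= ip (x - y) (x - y) by rewrite -hn sqr_ge0.
rewrite ipB !ipBr -!hn (hs y x) => h; lra.
Qed.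

Lemma ip_sq x : ip x x = `|x| ^+ 2.
Proof. by case: hip => _ [_ hn]. Qed.
End IP.


Section Top.
Variables (R : realType) (Z : normedModType R).
Definition PT := {ptws Z -> R}.

Lemma ev_cont (z : Z) : continuous (fun u : PT => u z).
Proof. exact: (@proj_continuous Z (fun _ => R) z). Qed.

Lemma Kcompact (r : R) :
  compact [set u : PT | forall z, `[-(r * `|z|), r * `|z|]%classic (u z)].
Proof.
exact: (@tychonoff Z (fun _ => R) (fun z => `[-(r * `|z|), r * `|z|]%classic)
  (fun z => @segment_compact _ _ _)).
Qed.

Lemma closed_le_cont (h : PT -> R) (c : R) : continuous h -> closed [set u | h u <= c].
Proof. move=> hc; exact: (preimage_closed (fun x _ => hc x) (@closed_le _ c)). Qed.

Lemma closed_eq_cont (h : PT -> R) (c : R) : continuous h -> closed [set u | h u = c].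
Proof. move=> hc; exact: (preimage_closed (fun x _ => hc x) (@closed_eq _ c)). Qed.

Lemma closed_forall (I : Type) (P : I -> PT -> Prop) :
  (forall i, closed [set u | P i u]) -> closed [set u | forall i, P i u].
Proof.
move=> h; have -> : [set u | forall i, P i u] = \bigcap_(i in setT) [set u | P i u].
  apply/seteqP; split => u /= H i; first by move=> _; exact: H.
  exact: H.
exact: closed_bigI.
Qed.

Lemma contB (f g : PT -> R) : continuous f -> continuous g -> continuous (fun u => f u - g u).
Proof. move=> hf hg u; exact: (cvgB (hf u) (hg u)). Qed.
Lemma contD (f g : PT -> R) : continuous f -> continuous g -> continuous (fun u => f u + g u).
Proof. move=> hf hg u; exact: (cvgD (hf u) (hg u)). Qed.
Lemma contMl (f : PT -> R) (a : R) : continuous f -> continuous (fun u => a * f u).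
Proof. move=> hf u; exact: (cvgMr (hf u)). Qed.

Lemma Lclosed : closed [set u : PT | islin u].
Proof.
apply: (@closed_forall R (fun a u => forall x y, u (a *: x + y) = a * u x + u y)) => a.
apply: (@closed_forall Z (fun x u => forall y, u (a *: x + y) = a * u x + u y)) => x.
apply: (@closed_forall Z (fun y u => u (a *: x + y) = a * u x + u y)) => y.
have -> : [set u : PT | u (a *: x + y) = a * u x + u y] =
   [set u : PT | u (a *: x + y) - (a * u x + u y) = 0].
  by apply/seteqP; split => u /= H; [rewrite H subrr | apply/eqP; rewrite -subr_eq0 H].
apply: closed_eq_cont; apply: contB; first exact: ev_cont.
by apply: contD; [apply: contMl|]; exact: ev_cont.
Qed.
End Top.


Lemma sub_eq0E (R : realType) (x : \bar R) (a : R) : x != -oo%E -> (x - a%:E = 0)%E <-> x = a%:E.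
Proof.
case: x => [r| |] //= _; split.
- by move=> /eqP; rewrite -EFinB eqe subr_eq0 => /eqP ->.
- by case => ->; rewrite subee.
Qed.

Lemma dual0 (R : realType) (Z : normedModType R) : is_dual (fun _ : Z => 0 : R).
Proof. by split; [move=> a x y; rewrite mulr0 addr0 | exact: cst_continuous]. Qed.

Lemma J0 (R : realType) (Z : normedModType R) (J : (Z -> R) -> \bar R) :
  abs_one_homogeneous J -> J (fun _ => 0) = 0%E.
Proof.
move=> h; have := h 0 (fun _ => 0) (@dual0 R Z).
have -> : (fun z : Z => 0 * (0 : R)) = (fun _ => 0) by apply: funext => z; rewrite mulr0.
by rewrite normr0 mul0e.
Qed.

Lemma ler_Nm (R : realType) (x y : R) : (forall e, 0 < e -> x <= y + e) -> x <= y.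
Proof. move=> h; apply/ler_addgt0Pr => e e0; exact: h. Qed.

Unset Implicit Arguments.
Theorem theorem2 (R : realType) (Y Z : completeNormedModType R)
  (ip : Y -> Y -> R) (B : Y -> Z) (A : (Z -> R) -> Y)
  (J : (Z -> R) -> \bar R) (f : Y) (p : Z) :
  is_inner_product ip ->
  wstar_metrizable_on_bounded Z ->
  (forall (a : R) (y1 y2 : Y), B (a *: y1 + y2) = a *: B y1 + B y2) ->
  continuous B ->
  (forall u, is_dual u -> forall y, ip (A u) y = u (B y)) ->
  (forall u, is_dual u -> J u != -oo%E) ->
  convex_on_dual J ->
  abs_one_homogeneous J ->
  (exists G : Z -> \bar R, proper_fun G /\ is_conjugate_of J G) ->
  coercive_on_dual A J ->
  in_subdiff0 J p ->
  (exists (w : Y) (tau : R), 0 < tau < 1 /\ conj_at J (tau^-1 *: (p - B w)) = 0%E) ->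
  exists u : Z -> R, is_dual u /\ (J u - (u p)%:E = 0)%E /\
    forall v : Z -> R, is_dual v -> (J v - (v p)%:E = 0)%E ->
      `|A u - f| ^+ 2 / 2 <= `|A v - f| ^+ 2 / 2.
Proof.
move=> hip _ hBl hBc hA hJ _ hhom [G [[Gninf Gex] hG]] hcoer hsub [w [tau [/andP[t0 t1] hconj]]].
pose feas v := is_dual v /\ J v = (v p)%:E.
have feasE v : is_dual v -> (J v - (v p)%:E = 0)%E <-> feas v.
  move=> dv; rewrite sub_eq0E ?hJ //; split => [h|[]//]; by split.
pose phi v := `|A v - f| ^+ 2 / 2.
have key v : feas v -> (1 - tau) * v p <= ip (A v) w.
  move=> [dv Jv].
  have : ((v (tau^-1 *: (p - B w)))%:E - J v <= 0)%E.
    rewrite -hconj; apply: ereal_sup_ubound; by exists v.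
  rewrite Jv -EFinB lee_fin (linZ (proj1 dv)) (linB (proj1 dv)).
  rewrite -(hA v dv) => h.
  have hti : tau * tau^-1 = 1 by rewrite mulfV ?gt_eqF.
  have h3 : 0 <= tau * (- (tau^-1 * (v p - ip (A v) w) - v p)).
    by apply: mulr_ge0; [exact: ltW | rewrite oppr_ge0].
  rewrite mulrN !mulrBr !mulrA hti !mul1r in h3.
  lra.
have bnd c : exists r, forall v0, feas v0 -> phi v0 <= c -> forall z, `|v0 z| <= r * `|z|.
  pose K0 := 2 * c + 1 + `|f|.
  pose M := K0 ^+ 2 / 2 + (K0 ^+ 2 + `|w| ^+ 2) / (2 * (1 - tau)).
  have [r hr] := hcoer M; exists r => v1 fv hv z.
  have kv := key v1 fv; case: fv => dv Jv.
  apply: (dual_bound dv) z; rewrite leNgt; apply/negP => /(hr v1 dv).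
  rewrite Jv -EFinD lte_fin.
  have hAv : `|A v1| <= K0.
    have := ler_normD (A v1 - f) f; rewrite subrK => h1.
    have h0 := normr_ge0 (A v1 - f).
    rewrite /phi in hv. rewrite /K0. nra.
  have hA0 := normr_ge0 (A v1).
  have hil := ip_le hip (A v1) w.
  have hvp : v1 p <= (K0 ^+ 2 + `|w| ^+ 2) / (2 * (1 - tau)).
    rewrite ler_pdivlMr; last lra. nra.
  rewrite /M; nra.
have hinf : has_inf [set phi v | v in feas].
  split.
    exists (phi (fun _ => 0)); exists (fun _ => 0) => //; split; first exact: dual0.
    by rewrite J0.
  exists 0 => _ [v _ <-]; rewrite /phi; apply: divr_ge0 => //; exact: sqr_ge0.
pose m := inf [set phi v | v in feas].
have [r hr] := bnd (m + 1).
pose Kr := [set u : PT Z | forall z, `[-(r * `|z|), r * `|z|]%classic (u z)].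
pose L := [set u : PT Z | islin u].
pose Fc := [set u : PT Z | forall z, ((u z)%:E - G z <= (u p)%:E)%E].
pose Ph c := [set u : PT Z | forall y, u (B y) - ip f y - `|y| ^+ 2 / 2 <= c].
pose S e := Kr `&` L `&` Fc `&` Ph (m + e).
have phiE v c : is_dual v -> Ph c v <-> phi v <= c.
  move=> dv; split.
  - move=> /(_ (A v - f)); rewrite -(hA v dv) -(ipB hip) (ip_sq hip) /phi; lra.
  - move=> hv y; rewrite -(hA v dv) -(ipB hip); have := ip_le hip (A v - f) y.
    rewrite /phi in hv; lra.
have KrE u : Kr u <-> forall z, `|u z| <= r * `|z|.
  by split => h z; have := h z; rewrite /= in_itv /= -ler_norml.
have Fccl : closed Fc.
  apply: (closed_forall (P := fun z (u : PT Z) => ((u z)%:E - G z <= (u p)%:E)%E)) => z.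
  case hGz : (G z) => [g| |].
  - have -> : [set u : PT Z | ((u z)%:E - g%:E <= (u p)%:E)%E] = [set u | u z - u p <= g].
      by apply/seteqP; split => u /=; rewrite -EFinB lee_fin; lra.
    by apply: closed_le_cont; apply: contB; exact: ev_cont.
  - have -> : [set u : PT Z | ((u z)%:E - +oo <= (u p)%:E)%E] = setT.
      by apply/seteqP; split => u //= _; rewrite addeNy leNye.
    exact: closedT.
  - by have := Gninf z; rewrite hGz.
have Phcl c : closed (Ph c).
  apply: (closed_forall (P := fun y (u : PT Z) => u (B y) - ip f y - `|y| ^+ 2 / 2 <= c)) => y.
  apply: closed_le_cont; apply: contB; last exact: cst_continuous.
  apply: contB; [exact: ev_cont | exact: cst_continuous].
have Sne e : 0 < e -> S e !=set0.
  move=> e0.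
  have me0 : 0 < Num.min e 1 by rewrite lt_min e0 ltr01.
  have [_ [v fv <-] hv] := inf_adherent me0 hinf.
  exists v; case: (fv) => dv Jv.
  have hv1 : phi v <= m + 1.
    apply: ltW; apply: (lt_le_trans hv); by rewrite lerD2l ge_min lexx orbT.
  rewrite /S /=; split; first split; first split.
  - by apply/KrE; exact: hr.
  - exact: dv.1.
  - move=> z; rewrite -Jv (hG v dv); apply: ereal_sup_ubound; by exists z.
  - apply/(phiE v _ dv); apply: ltW; apply: (lt_le_trans hv); by rewrite lerD2l ge_min lexx.
have Smono e1 e2 : e1 <= e2 -> S e1 `<=` S e2.
  move=> le12 v [[[h1 h2] h3] h4]; split=> //.
  move=> y; apply: le_trans (h4 y) _; by rewrite lerD2l.
pose F := filter_from [set e | 0 < e] S.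
have FF : ProperFilter F.
  apply: filter_from_proper => //.
  apply: filter_from_filter; first by exists 1; exact: ltr01.
  move=> e1 e2 /= e10 e20; exists (Num.min e1 e2); first by rewrite /= lt_min e10 e20.
  have h1 : Num.min e1 e2 <= e1 by rewrite ge_min lexx.
  have h2 : Num.min e1 e2 <= e2 by rewrite ge_min lexx orbT.
  move=> v Sv; split; [exact: (Smono _ _ h1 v Sv) | exact: (Smono _ _ h2 v Sv)].
pose C := Kr `&` (L `&` Fc).
have Ccomp : compact C.
  apply: compact_closedI; first exact: Kcompact.
  apply: closedI; [exact: Lclosed | exact: Fccl].
have FC : F C.
  exists 1; first exact: ltr01.
  by move=> v [[[h1 h2] h3] _].
have [u [Cu clu]] := Ccomp F FF FC.
case: Cu => Kru [Lu Fcu].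
have du : is_dual u by split => //; apply: (bounded_cont Lu); apply/KrE.
have Ju : J u = (u p)%:E.
  apply/le_anti/andP; split.
    rewrite (hG u du); apply: ge_ereal_sup => _ [z _ <-]; exact: Fcu z.
  by have := hsub u du; rewrite J0 // add0e.
have Phu e : 0 < e -> Ph (m + e) u.
  move=> e0; apply: (Phcl (m + e)) => B0 nB.
  have [x [Sx Bx]] := clu (S e) B0 (ex_intro2 _ _ e e0 (fun _ h => h)) nB.
  by exists x; split => //; case: Sx.
exists u; split => //; split; first by apply/(feasE u du).
move=> v dv /(feasE v dv) fv.
apply: (@le_trans _ _ m).
  apply: ler_Nm => e e0; apply/(phiE u _ du); exact: Phu.
by apply: (ge_inf hinf.2); exists v.
Qed.
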